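(* For every real number $\alpha\ge 1$ there exist real numbers $\alpha_0\le\alpha<\alpha_1$ such that, with $I_\alpha=[\alpha_0,\alpha_1)$: for every $\beta\in I_\alpha$ the sequences $(P^\beta_i)_{i\ge0}$ and $(P^\alpha_i)_{i\ge0}$ are identical, and for every real $\beta\ge 1$ with $\beta\notin I_\alpha$ the two sequences are not identical, i.e.\ there is an index $i$ with $P^\alpha_i\neq P^\beta_i$.
   Context: For a real number $\alpha\ge 1$, define the integer sequence $(P^\alpha_i)_{i\ge 0}$ by $P^\alpha_0=0$, $P^\alpha_1=1$, and for $k\ge 1$, $P^\alpha_{k+1}=P^\alpha_k+P^\alpha_j$, where $j\ge1$ is the unique index with $\alpha P^\alpha_{j-1}<P^\alpha_k\le \alpha P^\alpha_j$. (By a theorem of Schwenk, the terms of this sequence are exactly the pile sizes $n$ for which the initial position of $\alpha$-\textsc{tag} is a second-player win, where $\alpha$-\textsc{tag} is the game: a single pile of $n$ stones; players alternately remove at least one stone; the first move removes at most $n-1$ stones; each later move removes at most $\alpha$ times the number removed on the previous move; the player unable to move loses.) *)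

(* Defs.v *)
From Stdlib Require Import Reals List.
Import ListNotations.
Open Scope R_scope.

(* first j in j, j+1, ..., j+fuel-1 with p j = true (fallback: j+fuel) *)
Fixpoint least_from (p : nat -> bool) (j fuel : nat) : nat :=
  match fuel with
  | O => j
  | S f => if p j then j else least_from p (S j) f
  end.

Definition idx_ok (alpha : R) (l : list nat) (k j : nat) : bool :=
  let Pk := INR (nth k l 0%nat) in
  if Rlt_dec (alpha * INR (nth (pred j) l 0%nat)) Pk then
    if Rle_dec Pk (alpha * INR (nth j l 0%nat)) then true else false
  else false.

(* Plist alpha n = [P_0; P_1; ...; P_{n+1}] *)
Fixpoint Plist (alpha : R) (n : nat) : list nat :=
  match n with
  | O => [0%nat; 1%nat]
  | S m =>
      let l := Plist alpha m in
      let k := S m in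
      let j := least_from (idx_ok alpha l k) 1 k in
      l ++ [(nth k l 0 + nth j l 0)%nat]
  end.

Definition P (alpha : R) (i : nat) : nat := nth i (Plist alpha i) 0%nat.

(* Main.v *)
Require Import Defs.
From Stdlib Require Import Reals.
From Stdlib Require Import Lra Lia List Classical Arith.
Import ListNotations.
Open Scope R_scope.

Definition cond (b : R) (Q : nat -> nat) (k j : nat) : Prop :=
  b * INR (Q (pred j)) < INR (Q k) <= b * INR (Q j).

Lemma div_le_iff x y c : 0 < c -> (x / c <= y <-> x <= y * c).
Proof.
  intros Hc. replace x with ((x / c) * c) at 2 by (field; lra).
  split; intros H.
  - apply Rmult_le_compat_r; lra.
  - apply Rmult_le_reg_r with c; lra.
Qed.

Lemma lt_div_iff x y c : 0 < c -> (y < x / c <-> y * c < x).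
Proof.
  intros Hc. replace x with ((x / c) * c) at 2 by (field; lra).
  split; intros H.
  - apply Rmult_lt_compat_r; lra.
  - apply Rmult_lt_reg_r with c; lra.
Qed.

Lemma least_from_unique (p : nat -> bool) (fuel : nat) : forall j m,
  (j <= m < j + fuel)%nat -> p m = true ->
  (forall m', (j <= m' < j + fuel)%nat -> p m' = true -> m' = m) ->
  least_from p j fuel = m.
Proof.
  induction fuel as [|f IH]; intros j m Hr Hm Hu; [lia|].
  simpl. destruct (p j) eqn:E.
  - apply Hu; [lia|exact E].
  - apply IH; [|exact Hm|].
    + assert (j <> m) by (intro; subst; congruence). lia.
    + intros m' Hr' Hm'. apply Hu; [lia|exact Hm'].
Qed.

Lemma Plist_S b n : Plist b (S n) =
  Plist b n ++ [(nth (S n) (Plist b n) 0 + nth (least_from (idx_ok b (Plist b n) (S n)) 1 (S n)) (Plist b n) 0)%nat].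
Proof. reflexivity. Qed.

Lemma Plist_length b n : length (Plist b n) = S (S n).
Proof. induction n; [reflexivity|]. rewrite Plist_S, length_app, IHn. simpl. lia. Qed.

Lemma Plist_ext b n : forall m i, (i < S (S n))%nat ->
  nth i (Plist b (m + n)) 0%nat = nth i (Plist b n) 0%nat.
Proof.
  intros m; induction m as [|m IH]; intros i Hi; [reflexivity|].
  change (S m + n)%nat with (S (m + n)).
  rewrite Plist_S, app_nth1; [apply IH; exact Hi|].
  rewrite Plist_length. lia.
Qed.

Lemma nth_Plist b n i : (i <= S n)%nat -> nth i (Plist b n) 0%nat = P b i.
Proof.
  intros Hi. unfold P.
  rewrite <- (Plist_ext b n i i) by lia.
  rewrite <- (Plist_ext b i n i) by lia.
  rewrite Nat.add_comm. reflexivity.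
Qed.

Lemma P0 b : P b 0 = 0%nat. Proof. reflexivity. Qed.
Lemma P1 b : P b 1 = 1%nat. Proof. unfold P. rewrite Plist_S. reflexivity. Qed.

Definition Jf b k := least_from (idx_ok b (Plist b (pred k)) k) 1 k.

Lemma P_rec b m : P b (S (S m)) = (P b (S m) + nth (Jf b (S m)) (Plist b m) 0)%nat.
Proof.
  rewrite <- (nth_Plist b (S m) (S (S m))) by lia.
  rewrite Plist_S, app_nth2; rewrite ?Plist_length; [|lia].
  rewrite Nat.sub_diag. simpl nth. rewrite (nth_Plist b m (S m)) by lia. reflexivity.
Qed.

Lemma idx_ok_iff b m j : (j <= S m)%nat ->
  idx_ok b (Plist b m) (S m) j = true <-> cond b (P b) (S m) j.
Proof.
  intros Hj. unfold idx_ok, cond. cbv zeta.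
  rewrite (nth_Plist b m (S m)), (nth_Plist b m (pred j)), (nth_Plist b m j) by lia.
  destruct (Rlt_dec _ _) as [H1|H1]; [destruct (Rle_dec _ _) as [H2|H2]|].
  - split; [intros _; split; assumption|intros _; reflexivity].
  - split; [discriminate|intros [_ H]; contradiction].
  - split; [discriminate|intros [H _]; contradiction].
Qed.

Lemma cond_exists (b : R) (Q : nat -> nat) (k : nat) :
  Q 0%nat = 0%nat -> (0 < Q k)%nat ->
  forall n, (1 <= n)%nat -> INR (Q k) <= b * INR (Q n) ->
  exists j, (1 <= j <= n)%nat /\ cond b Q k j.
Proof.
  intros HQ0 Hk n. induction n as [|n IH]; intros Hn Hle; [lia|].
  destruct n as [|n].
  - exists 1%nat. split; [lia|]. unfold cond. change (pred 1) with 0%nat. rewrite HQ0, INR_0.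
    split; [| exact Hle]. rewrite Rmult_0_r. apply lt_0_INR. exact Hk.
  - destruct (Rlt_dec (b * INR (Q (S n))) (INR (Q k))) as [Hlt|Hnlt].
    + exists (S (S n)). split; [lia|]. split; [exact Hlt|exact Hle].
    + destruct (IH ltac:(lia) ltac:(lra)) as [j [Hj Hc]]. exists j. split; [lia|exact Hc].
Qed.

Lemma cond_unique b Q k j1 j2 : 0 <= b ->
  (forall i i', (i <= i' <= k)%nat -> (Q i <= Q i')%nat) ->
  (1 <= j1 <= k)%nat -> (1 <= j2 <= k)%nat ->
  cond b Q k j1 -> cond b Q k j2 -> j1 = j2.
Proof.
  intros Hb Hm H1 H2 [A1 B1] [A2 B2].
  destruct (lt_eq_lt_dec j1 j2) as [[Hlt|Heq]|Hlt]; [|exact Heq|].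
  - exfalso. assert (HQ : INR (Q j1) <= INR (Q (pred j2))) by (apply le_INR, Hm; lia).
    assert (b * INR (Q j1) <= b * INR (Q (pred j2))) by (apply Rmult_le_compat_l; assumption). lra.
  - exfalso. assert (HQ : INR (Q j2) <= INR (Q (pred j1))) by (apply le_INR, Hm; lia).
    assert (b * INR (Q j2) <= b * INR (Q (pred j1))) by (apply Rmult_le_compat_l; assumption). lra.
Qed.

Lemma mono_of_step (Q : nat -> nat) n : (forall i, (i < n)%nat -> (Q i < Q (S i))%nat) ->
  forall i j, (i <= j <= n)%nat -> (Q i <= Q j)%nat.
Proof.
  intros H i j [Hij Hjn]. induction j as [|j IH].
  - assert (i = 0%nat) by lia. subst. lia.
  - destruct (Nat.eq_dec i (S j)) as [->|Hne]; [lia|].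
    specialize (IH ltac:(lia) ltac:(lia)). specialize (H j ltac:(lia)). lia.
Qed.

Lemma step b m : 1 <= b ->
  (forall i, (i < S m)%nat -> (P b i < P b (S i))%nat) ->
  (1 <= Jf b (S m) <= S m)%nat /\ cond b (P b) (S m) (Jf b (S m)) /\
  P b (S (S m)) = (P b (S m) + P b (Jf b (S m)))%nat.
Proof.
  intros Hb Hs.
  assert (Hmono := mono_of_step (P b) (S m) Hs).
  assert (Hpos : (0 < P b (S m))%nat).
  { pose proof (Hs 0%nat ltac:(lia)). pose proof (Hmono 1%nat (S m) ltac:(lia)).
    rewrite P0 in *. lia. }
  assert (Hle : INR (P b (S m)) <= b * INR (P b (S m))).
  { pose proof (pos_INR (P b (S m))). nra. }
  destruct (cond_exists b (P b) (S m) (P0 b) Hpos (S m) ltac:(lia) Hle) as [j [Hj Hc]].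
  assert (HJ : Jf b (S m) = j).
  { unfold Jf. change (least_from (idx_ok b (Plist b m) (S m)) 1 (S m) = j).
    apply least_from_unique.
    - lia.
    - apply idx_ok_iff; [lia|exact Hc].
    - intros m' Hm' Hp. apply idx_ok_iff in Hp; [|lia].
      apply (cond_unique b (P b) (S m) m' j); [lra|exact Hmono|lia|lia|exact Hp|exact Hc]. }
  rewrite HJ. split; [lia|]. split; [exact Hc|].
  rewrite P_rec, HJ, (nth_Plist b m j) by lia. reflexivity.
Qed.

Lemma P_step b : 1 <= b -> forall n i, (i < n)%nat -> (P b i < P b (S i))%nat.
Proof.
  intros Hb n. induction n as [|n IH]; intros i Hi; [lia|].
  destruct (Nat.eq_dec i n) as [->|Hne]; [|apply IH; lia].
  destruct n as [|m]. { rewrite P0, P1. lia. }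
  destruct (step b m Hb IH) as [HJ [_ Hrec]].
  rewrite Hrec. pose proof (mono_of_step (P b) (S m) IH 1%nat (Jf b (S m)) ltac:(lia)) as Hm1.
  rewrite P1 in Hm1. lia.
Qed.

Lemma P_lt b : 1 <= b -> forall i j, (i < j)%nat -> (P b i < P b j)%nat.
Proof.
  intros Hb i j Hij. induction j as [|j IHj]; [lia|].
  destruct (Nat.eq_dec i j) as [->|]; [apply (P_step b Hb (S j)); lia|].
  pose proof (P_step b Hb (S j) j ltac:(lia)). specialize (IHj ltac:(lia)). lia.
Qed.

Lemma P_le b : 1 <= b -> forall i j, (i <= j)%nat -> (P b i <= P b j)%nat.
Proof.
  intros Hb i j Hij. destruct (Nat.eq_dec i j) as [->|]; [lia|].
  pose proof (P_lt b Hb i j ltac:(lia)). lia.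
Qed.

Lemma P_pos b i : 1 <= b -> (1 <= i)%nat -> 0 < INR (P b i).
Proof.
  intros Hb Hi. apply lt_0_INR. pose proof (P_lt b Hb 0 i ltac:(lia)). rewrite P0 in H. lia.
Qed.

Lemma Jfacts b k : 1 <= b -> (1 <= k)%nat ->
  (1 <= Jf b k <= k)%nat /\ cond b (P b) k (Jf b k) /\ P b (S k) = (P b k + P b (Jf b k))%nat.
Proof.
  intros Hb Hk. destruct k as [|m]; [lia|]. apply step; [exact Hb|].
  intros i _. apply (P_step b Hb (S i)). lia.
Qed.

Lemma J_unique b k j : 1 <= b -> (1 <= k)%nat -> (1 <= j <= k)%nat -> cond b (P b) k j -> j = Jf b k.
Proof.
  intros Hb Hk Hj Hc. destruct (Jfacts b k Hb Hk) as [HJ [HcJ _]].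
  apply (cond_unique b (P b) k); [lra| |exact Hj|exact HJ|exact Hc|exact HcJ].
  intros i i' Hi. apply P_le; [exact Hb|lia].
Qed.

Lemma same_seq a be : 1 <= a -> 1 <= be ->
  (forall k, (1 <= k)%nat -> cond be (P a) k (Jf a k)) -> forall i, P be i = P a i.
Proof.
  intros Ha Hb H.
  assert (G : forall n i, (i <= n)%nat -> P be i = P a i).
  { induction n as [|n IH]; intros i Hi.
    - assert (i = 0%nat) by lia. subst. rewrite !P0. reflexivity.
    - destruct (Nat.eq_dec i (S n)) as [->|]; [|apply IH; lia].
      destruct n as [|k]. { rewrite !P1; reflexivity. }
      destruct (Jfacts a (S k) Ha ltac:(lia)) as [HJa [Hca Hra]].
      destruct (Jfacts be (S k) Hb ltac:(lia)) as [HJb [Hcb Hrb]].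
      assert (E : Jf be (S k) = Jf a (S k)).
      { symmetry. apply J_unique; [exact Hb|lia|exact HJa|].
        specialize (H (S k) ltac:(lia)). unfold cond in *.
        rewrite (IH (S k)), (IH (pred (Jf a (S k)))), (IH (Jf a (S k))) by lia. exact H. }
      rewrite Hrb, Hra, E, (IH (S k)), (IH (Jf a (S k))) by lia. reflexivity. }
  intros i. apply (G i i). lia.
Qed.

Lemma diff_seq a be k : 1 <= a -> 1 <= be -> (1 <= k)%nat ->
  ~ cond be (P a) k (Jf a k) -> exists i, P a i <> P be i.
Proof.
  intros Ha Hb Hk Hn. apply NNPP. intros Hne.
  assert (Heq : forall i, P a i = P be i).
  { intros i. destruct (Nat.eq_dec (P a i) (P be i)) as [e|e]; [exact e|].
    exfalso; apply Hne; exists i; exact e. }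
  destruct (Jfacts a k Ha Hk) as [HJa [Hca Hra]].
  destruct (Jfacts be k Hb Hk) as [HJb [Hcb Hrb]].
  rewrite <- !Heq in Hrb.
  assert (E : P a (Jf a k) = P a (Jf be k)) by lia.
  assert (E' : Jf a k = Jf be k).
  { destruct (lt_eq_lt_dec (Jf a k) (Jf be k)) as [[Hlt|Heq']|Hlt]; [|exact Heq'|].
    - pose proof (P_lt a Ha _ _ Hlt). lia.
    - pose proof (P_lt a Ha _ _ Hlt). lia. }
  apply Hn. rewrite E'. unfold cond in *. rewrite <- !Heq in Hcb. exact Hcb.
Qed.

Lemma J_succ_le a k : 1 <= a -> (1 <= k)%nat -> (Jf a (S k) <= S (Jf a k))%nat.
Proof.
  intros Ha Hk.
  destruct (Jfacts a k Ha Hk) as [HJ [[_ Hc2] Hr]].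
  destruct (Jfacts a (S k) Ha ltac:(lia)) as [HJS [[Hc1 _] _]].
  destruct (Jfacts a (Jf a k) Ha ltac:(lia)) as [HJJ [[_ Hd2] Hd]].
  destruct (le_lt_dec (Jf a (S k)) (S (Jf a k))) as [|Hlt]; [assumption|exfalso].
  assert (Hm : INR (P a (S (Jf a k))) <= INR (P a (pred (Jf a (S k))))) by (apply le_INR, P_le; [exact Ha|lia]).
  rewrite Hr in Hc1. rewrite Hd in Hm. rewrite !plus_INR in *.
  assert (a * (INR (P a (Jf a k)) + INR (P a (Jf a (Jf a k)))) <= a * INR (P a (pred (Jf a (S k)))))
    by (apply Rmult_le_compat_l; lra).
  lra.
Qed.

Lemma growth a m : 1 <= a -> (1 <= m)%nat -> forall t,
  INR (P a m) * (a + INR t) <= a * INR (P a (m + t)).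
Proof.
  intros Ha Hm t. induction t as [|t IH].
  - rewrite Nat.add_0_r, INR_0. lra.
  - rewrite Nat.add_succ_r, S_INR.
    destruct (Jfacts a (m + t)%nat Ha ltac:(lia)) as [_ [[_ Hc] Hr]].
    rewrite Hr, plus_INR.
    assert (INR (P a m) <= INR (P a (m + t))) by (apply le_INR, P_le; [exact Ha|lia]).
    lra.
Qed.

Lemma d_bound a k : 1 <= a -> (1 <= k)%nat -> INR (k - Jf a k) <= a * a.
Proof.
  intros Ha Hk. destruct (Jfacts a k Ha Hk) as [HJ [[_ Hc] _]].
  pose proof (growth a (Jf a k) Ha ltac:(lia) (k - Jf a k)) as G.
  replace (Jf a k + (k - Jf a k))%nat with k in G by lia.
  assert (Hp : 0 < INR (P a (Jf a k))) by (apply P_pos; [exact Ha|lia]).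
  assert (H1 : a * INR (P a k) <= a * (a * INR (P a (Jf a k)))) by (apply Rmult_le_compat_l; lra).
  assert (H2 : INR (P a (Jf a k)) * (a + INR (k - Jf a k)) <= INR (P a (Jf a k)) * (a*a)) by lra.
  apply Rmult_le_reg_l in H2; [lra|exact Hp].
Qed.

Lemma ev_const (d : nat -> nat) (D : nat) :
  (forall k, (1 <= k)%nat -> (d k <= d (S k))%nat) ->
  (forall k, (1 <= k)%nat -> (d k <= D)%nat) ->
  exists K, (1 <= K)%nat /\ forall k, (K <= k)%nat -> d k = d K.
Proof.
  intros Hm HD.
  assert (Hmono : forall k0 t, (1 <= k0)%nat -> (d k0 <= d (t + k0))%nat).
  { intros k0 t H. induction t; [simpl; lia|]. simpl. specialize (Hm (t + k0)%nat ltac:(lia)). lia. }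
  assert (G : forall n k0, (1 <= k0)%nat -> (D - d k0 <= n)%nat ->
     exists K, (1 <= K)%nat /\ forall k, (K <= k)%nat -> d k = d K).
  { induction n as [|n IH]; intros k0 Hk0 Hn;
    (destruct (classic (exists k, (k0 <= k)%nat /\ d k <> d k0)) as [[k [Hk Hne]]|Hno];
     [pose proof (Hmono k0 (k - k0)%nat Hk0) as Hmk;
      replace (k - k0 + k0)%nat with k in Hmk by lia;
      pose proof (HD k ltac:(lia)) as HDk |
      exists k0; split; [exact Hk0|]; intros k Hk;
      destruct (Nat.eq_dec (d k) (d k0)) as [e|e]; [exact e|exfalso; apply Hno; exists k; split; assumption]]).
    - exfalso. lia.
    - apply (IH k); lia. }
  apply (G D 1%nat); lia.
Qed.

Lemma eventual a : 1 <= a -> exists K s, (1 <= K)%nat /\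
  forall k, (K <= k)%nat -> Jf a k = (k - s)%nat /\ (s < k)%nat.
Proof.
  intros Ha.
  destruct (INR_unbounded (a * a)) as [D HD].
  destruct (ev_const (fun k => k - Jf a k)%nat D) as [K [HK HKc]].
  - intros k Hk. pose proof (J_succ_le a k Ha Hk).
    destruct (Jfacts a k Ha Hk) as [H1 _]. destruct (Jfacts a (S k) Ha ltac:(lia)) as [H2 _]. lia.
  - intros k Hk. pose proof (d_bound a k Ha Hk). apply Nat.lt_le_incl, INR_lt. lra.
  - exists K, (K - Jf a K)%nat. split; [exact HK|]. intros k Hk.
    specialize (HKc k Hk). simpl in HKc.
    destruct (Jfacts a k Ha ltac:(lia)) as [H1 _]. lia.
Qed.

Lemma upper_prop a K s be : 1 <= a -> (1 <= K)%nat ->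
  (forall k, (K <= k)%nat -> Jf a k = (k - s)%nat /\ (s < k)%nat) ->
  (forall k', (k' <= K + 2*s + 2)%nat -> (1 <= k')%nat -> (2 <= Jf a k')%nat ->
       be * INR (P a (pred (Jf a k'))) < INR (P a k')) ->
  forall k, (1 <= k)%nat -> (2 <= Jf a k)%nat -> be * INR (P a (pred (Jf a k))) < INR (P a k).
Proof.
  intros Ha HK HJ Hbase k. induction k as [k IH] using lt_wf_ind. intros Hk HJk.
  destruct (le_lt_dec k (K + 2*s + 2)) as [Hle|Hgt]; [apply Hbase; assumption|].
  destruct k as [|k']; [lia|].
  destruct (HJ (S k') ltac:(lia)) as [E1 _].
  destruct (HJ k' ltac:(lia)) as [E2 _].
  destruct (HJ (k' - s - 1)%nat ltac:(lia)) as [E3 _].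
  destruct (HJ (k' - s)%nat ltac:(lia)) as [E4 _].
  pose proof (IH k' ltac:(lia) ltac:(lia) ltac:(lia)) as I1.
  pose proof (IH (k' - s)%nat ltac:(lia) ltac:(lia) ltac:(lia)) as I2.
  destruct (Jfacts a k' Ha ltac:(lia)) as [_ [_ R1]].
  destruct (Jfacts a (k' - s - 1)%nat Ha ltac:(lia)) as [_ [_ R2]].
  rewrite E2 in I1, R1. rewrite E4 in I2. rewrite E3 in R2. rewrite E1.
  replace (pred (S k' - s)) with (k' - s)%nat by lia.
  replace (pred (k' - s)) with (k' - s - 1)%nat in I1 by lia.
  replace (pred (k' - s - s)) with (k' - s - 1 - s)%nat in I2 by lia.
  replace (S (k' - s - 1)) with (k' - s)%nat in R2 by lia.
  rewrite R1, plus_INR. rewrite R2 at 1. rewrite plus_INR. lra.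
Qed.

Lemma fin_min (f : nat -> R) (Pr : nat -> Prop) N :
  (exists k, (k <= N)%nat /\ Pr k) ->
  exists k0, (k0 <= N)%nat /\ Pr k0 /\ forall k, (k <= N)%nat -> Pr k -> f k0 <= f k.
Proof.
  induction N as [|N IH]; intros [k [Hk HP]].
  - exists k. split; [exact Hk|split; [exact HP|]]. intros k' Hk' HP'.
    assert (k = 0%nat) by lia. assert (k' = 0%nat) by lia. subst. lra.
  - destruct (classic (exists k, (k <= N)%nat /\ Pr k)) as [Hex|Hno].
    + destruct (IH Hex) as [k0 [Hk0 [HP0 Hmin]]].
      destruct (classic (Pr (S N))) as [HPS|HPS].
      * destruct (Rle_dec (f k0) (f (S N))) as [Hle|Hlt].
        -- exists k0. split; [lia|split; [exact HP0|]]. intros k' Hk' HP'.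
           destruct (Nat.eq_dec k' (S N)) as [->|]; [exact Hle|apply Hmin; [lia|exact HP']].
        -- exists (S N). split; [lia|split; [exact HPS|]]. intros k' Hk' HP'.
           destruct (Nat.eq_dec k' (S N)) as [->|]; [lra|]. specialize (Hmin k' ltac:(lia) HP'). lra.
      * exists k0. split; [lia|split; [exact HP0|]]. intros k' Hk' HP'.
        destruct (Nat.eq_dec k' (S N)) as [->|]; [contradiction|apply Hmin; [lia|exact HP']].
    + assert (k = S N).
      { destruct (Nat.eq_dec k (S N)); [assumption|exfalso; apply Hno; exists k; split; [lia|exact HP]]. }
      subst k.
      exists (S N). split; [lia|split; [exact HP|]]. intros k' Hk' HP'.
      destruct (Nat.eq_dec k' (S N)) as [->|]; [lra|exfalso; apply Hno; exists k'; split; [lia|exact HP']].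
Qed.

Theorem mainTheorem1 (alpha : R) (halpha : 1 <= alpha) :
  exists alpha0 alpha1 : R,
    alpha0 <= alpha < alpha1 /\
    (forall beta : R, alpha0 <= beta < alpha1 -> forall i : nat, P beta i = P alpha i) /\
    (forall beta : R, 1 <= beta -> ~ (alpha0 <= beta < alpha1) ->
       exists i : nat, P alpha i <> P beta i).
Proof.
  set (E := fun x => exists k, (1 <= k)%nat /\ x = INR (P alpha k) / INR (P alpha (Jf alpha k))).
  assert (HEub : forall x, E x -> x <= alpha).
  { intros x [k [Hk ->]]. destruct (Jfacts alpha k halpha Hk) as [HJ [[_ Hc] _]].
    apply div_le_iff; [apply P_pos; [exact halpha|lia]|exact Hc]. }
  assert (HE1 : E 1).
  { exists 1%nat. split; [lia|]. destruct (Jfacts alpha 1 halpha ltac:(lia)) as [HJ _].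
    replace (Jf alpha 1) with 1%nat by lia. rewrite P1. simpl. field. }
  destruct (completeness E) as [a0 [Hub Hlub]].
  { exists alpha. exact HEub. }
  { exists 1. exact HE1. }
  assert (Ha01 : 1 <= a0) by (apply Hub; exact HE1).
  assert (Ha0a : a0 <= alpha) by (apply Hlub; exact HEub).
  destruct (eventual alpha halpha) as [K [s [HK HJ]]].
  set (f := fun k => INR (P alpha k) / INR (P alpha (pred (Jf alpha k)))).
  destruct (fin_min f (fun k => (1 <= k)%nat /\ (2 <= Jf alpha k)%nat) (K + 2*s + 2)%nat)
    as [k0 [Hk0 [[Hk01 Hk02] Hmin]]].
  { exists (K + 2*s + 2)%nat. destruct (HJ (K + 2*s + 2)%nat ltac:(lia)). split; [lia|]. split; lia. }
  assert (Hpp : forall k, (2 <= Jf alpha k)%nat -> 0 < INR (P alpha (pred (Jf alpha k)))).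
  { intros k H. apply P_pos; [exact halpha|lia]. }
  exists a0, (f k0).
  split; [split|split].
  - exact Ha0a.
  - destruct (Jfacts alpha k0 halpha Hk01) as [_ [[Hc _] _]].
    unfold f. apply lt_div_iff; [apply Hpp; exact Hk02|exact Hc].
  - intros be [Hb1 Hb2] i. apply same_seq; [exact halpha|lra|].
    intros k Hk. unfold cond. destruct (Jfacts alpha k halpha Hk) as [HJk _]. split.
    + destruct (Nat.eq_dec (Jf alpha k) 1) as [e|ne].
      * rewrite e. change (pred 1) with 0%nat. rewrite P0, INR_0, Rmult_0_r. apply P_pos; [exact halpha|exact Hk].
      * apply (upper_prop alpha K s be halpha HK HJ); [|exact Hk|lia].
        intros k' Hk' H1 H2. specialize (Hmin k' Hk' (conj H1 H2)).
        unfold f in Hmin. apply lt_div_iff; [apply Hpp; exact H2|]. unfold f in Hb2. lra.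
    + assert (Hx : E (INR (P alpha k) / INR (P alpha (Jf alpha k)))) by (exists k; split; [exact Hk|reflexivity]).
      apply Hub in Hx. apply div_le_iff; [apply P_pos; [exact halpha|lia]|lra].
  - intros be Hb Hn. destruct (Rlt_dec be a0) as [Hlt|Hge].
    + assert (Hnub : ~ is_upper_bound E be) by (intro Hu; apply Hlub in Hu; lra).
      unfold is_upper_bound in Hnub. apply not_all_ex_not in Hnub. destruct Hnub as [x Hx].
      apply imply_to_and in Hx. destruct Hx as [[k [Hk ->]] Hx].
      apply (diff_seq alpha be k halpha Hb Hk). intros [_ Hc]. apply Hx.
      apply div_le_iff; [apply P_pos; [exact halpha|]|exact Hc].
      destruct (Jfacts alpha k halpha Hk). lia.
    + assert (Hge1 : f k0 <= be) by lra.
      apply (diff_seq alpha be k0 halpha Hb Hk01). intros [Hc _].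
      assert (be < f k0) by (unfold f; apply lt_div_iff; [apply Hpp; exact Hk02|exact Hc]). lra.
Qed.
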